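(* For $p,q\ge 0$ let $K_{p,q}$ be the complete bipartite graph with parts of sizes $p$ and $q$ (every vertex of one part adjacent to every vertex of the other, no edges within parts). Then $$\sum_{p\ge0}\sum_{q\ge0}\mathrm{sa}(K_{p,q})\,\frac{x^p}{p!}\frac{y^q}{q!} = \frac{\cosh x+\cosh y-1}{\cosh(x+y)}.$$
   Context: All graphs are finite, simple and undirected. For a graph $G=(V,E)$ and $V'\subseteq V$, $G|_{V'}$ denotes the induced subgraph on $V'$. The signed a-number $\mathrm{sa}(G)$ is defined recursively: $\mathrm{sa}(G)=1$ if $G$ is the empty graph (no vertices); $\mathrm{sa}(G)=0$ if $G$ has a connected component with an odd number of vertices; otherwise $\mathrm{sa}(G)=-\sum_{V'\subsetneq V}\mathrm{sa}(G|_{V'})$. *)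

(* Defs.v *)
From mathcomp Require Import all_boot all_algebra.
From Stdlib Require Import Reals.
From Coquelicot Require Import Coquelicot.

Set Implicit Arguments.
Unset Strict Implicit.
Unset Printing Implicit Defensive.

Import GRing.Theory.

Section SignedANumber.
Variables (T : finType) (e : rel T).

Definition induced_rel (V : {set T}) : rel T :=
  fun x y => [&& x \in V, y \in V & e x y].

Definition component (V : {set T}) (x : T) : {set T} :=
  [set y in V | connect (induced_rel V) x y].

Definition has_odd_component (V : {set T}) : bool :=
  [exists x in V, odd #|component V x|].

(* recursion with fuel; correct whenever fuel >= #|V| *)
Fixpoint sa_fuel (n : nat) (V : {set T}) : int :=
  if V == set0 then (1 : int)
  else if has_odd_component V then (0 : int)
  else match n with
       | 0 => (0 : int)
       | n'.+1 => GRing.opp (\big[GRing.add/(0 : int)]_(W : {set T} | W \proper V) sa_fuel n' W)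
       end.

Definition sa (V : {set T}) : int := sa_fuel #|V| V.

Definition sa_graph : int := sa [set: T].
End SignedANumber.

(* complete bipartite graph K_{p,q} on vertices 'I_(p+q):
   parts {0..p-1} and {p..p+q-1} *)
Definition Kpq_rel (p q : nat) : rel 'I_(p + q) :=
  fun x y => leq (nat_of_ord x).+1 p != leq (nat_of_ord y).+1 p.

Definition sa_K (p q : nat) : int := sa_graph (@Kpq_rel p q).

Definition int_to_R (z : int) : R :=
  match z with
  | Posz n => INR n
  | Negz n => Ropp (INR n.+1)
  end.

(* Main.v *)
Require Import Defs.
From Stdlib Require Import Reals Lra.
From Coquelicot Require Import Coquelicot.
From mathcomp Require Import all_boot all_algebra.
From mathcomp Require Import zify.
Delimit Scope ring_scope with R.
Delimit Scope nat_scope with N.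
Local Open Scope nat_scope.
Import GRing.Theory Num.Theory.

Set Implicit Arguments.
Unset Strict Implicit.
Unset Printing Implicit Defensive.

Definition oddc (a b : nat) : bool := [|| a == 0%N, b == 0%N | odd (a + b)].

Fixpoint Sf (n a b : nat) : int :=
  if (a == 0%N) && (b == 0%N) then 1%R
  else if oddc a b then 0%R
  else match n with
       | 0 => 0%R
       | n'.+1 => (- \sum_(i < a.+1) \sum_(j < b.+1)
             (if (i == a :> nat) && (j == b :> nat) then 0
              else ('C(a, i) * 'C(b, j))%:Z * Sf n' i j))%R
       end.

Section Graph.
Variables p q : nat.
Notation T := 'I_(p + q).
Notation e := (@Kpq_rel p q).

Definition Lp : {set T} := [set x : T | (x < p)%N].
Definition AV (V : {set T}) := #|V :&: Lp|.
Definition BV (V : {set T}) := #|V :\: Lp|.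

Lemma cardAB (V : {set T}) : #|V| = (AV V + BV V)%N.
Proof. by rewrite /AV /BV cardsID. Qed.

Lemma V0 (V : {set T}) : (V == set0) = (AV V == 0%N) && (BV V == 0%N).
Proof. by rewrite -cards_eq0 cardAB addn_eq0. Qed.

Lemma connect_noedge (r : rel T) x y :
  (forall z, r x z = false) -> connect r x y -> y = x.
Proof.
move=> H /connectP [[|z s]] /=; first by move=> _ ->.
by rewrite H.
Qed.

Lemma odd_comp (V : {set T}) : V != set0 ->
  has_odd_component e V = oddc (AV V) (BV V).
Proof.
move=> V0'.
have [x xV] := set0Pn _ V0'.
rewrite /oddc.
case: (posnP (AV V)) => [a0|apos].
  have hx : forall y, y \in V -> ~~ (y < p)%N.
    move=> y yV; apply/negP => yp.
    have : (0 < #|V :&: Lp|)%N by apply/card_gt0P; exists y; rewrite inE yV inE yp.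
    by rewrite -/(AV V) a0.
  rewrite a0 /=; apply/existsP; exists x; rewrite xV /=.
  suff -> : component e V x = [set x] by rewrite cards1.
  apply/setP => y; rewrite !inE; apply/andP/eqP => [[yV]|->]; last by rewrite xV connect0.
  apply: connect_noedge => z; rewrite /induced_rel xV /=.
  case zV: (z \in V) => //=; rewrite /Kpq_rel.
  by move: (hx _ xV) (hx _ zV); case: (x < p)%N; case: (z < p)%N.
case: (posnP (BV V)) => [b0|bpos].
  have hx : forall y, y \in V -> (y < p)%N.
    move=> y yV; apply/negPn/negP => yp.
    have : (0 < #|V :\: Lp|)%N by apply/card_gt0P; exists y; rewrite inE yV inE yp.
    by rewrite -/(BV V) b0.
  rewrite b0 orbT /=; apply/existsP; exists x; rewrite xV /=.
  suff -> : component e V x = [set x] by rewrite cards1.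
  apply/setP => y; rewrite !inE; apply/andP/eqP => [[yV]|->]; last by rewrite xV connect0.
  apply: connect_noedge => z; rewrite /induced_rel xV /=.
  case zV: (z \in V) => //=; rewrite /Kpq_rel.
  by move: (hx _ xV) (hx _ zV) => -> ->.
have [u uin] := card_gt0P apos.
have [w win] := card_gt0P bpos.
move: uin win; rewrite !inE => /andP[uV up] /andP[wp wV].
have compV : forall x, x \in V -> component e V x = V.
  move=> x0 x0V; apply/setP => y; rewrite inE.
  case yV: (y \in V) => //=.
  have edge : forall s t, s \in V -> t \in V -> (s < p)%N != (t < p)%N ->
      connect (induced_rel e V) s t.
    by move=> s t sV tV st; apply: connect1; rewrite /induced_rel sV tV.
  case hx0: (x0 < p)%N; case hy: (y < p)%N.
  - apply: connect_trans (edge x0 w x0V wV _) (edge w y wV yV _); rewrite ?hx0 ?hy //.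
      by move: wp; case: (nat_of_ord w < p)%N.
  - by apply: edge; rewrite ?hx0 ?hy.
  - by apply: edge; rewrite ?hx0 ?hy.
  - apply: connect_trans (edge x0 u x0V uV _) (edge u y uV yV _); rewrite ?hx0 ?hy ?up //.
rewrite /has_odd_component; apply/existsP/idP => [[z /andP[zV]]|ho].
  by rewrite compV // cardAB.
by exists x; rewrite xV compV // cardAB.
Qed.


Lemma sum_by_card (U : {set T}) (G : nat -> int) :
  (\sum_(Y : {set T} | Y \subset U) G #|Y| =
   \sum_(j < #|U|.+1) ('C(#|U|, j))%:Z * G j)%R.
Proof.
rewrite (partition_big (fun Y : {set T} => (inord #|Y| : 'I_(#|U|.+1))) xpredT) //=.
apply: eq_bigr => j _.
have hin : forall Y : {set T}, Y \subset U -> (#|Y| < #|U|.+1)%N.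
  by move=> Y YU; rewrite ltnS subset_leq_card.
rewrite (eq_bigr (fun _ => G j)); last first.
  by move=> Y /andP[YU /eqP hj]; rewrite -hj inordK // hin.
rewrite (eq_bigl (fun Y => Y \in [set Y : {set T} | Y \subset U & #|Y| == j])); last first.
  move=> Y; rewrite inE; case YU: (Y \subset U) => //=.
  apply/eqP/eqP => [<-|hY]; first by rewrite inordK // hin.
  by apply/val_inj => /=; rewrite inordK ?hY ?hin.
by rewrite sumr_const cards_draws -mulr_natl natz.
Qed.

Lemma sum_subsets (V : {set T}) (F : nat -> nat -> int) :
  (\sum_(W : {set T} | W \subset V) F (AV W) (BV W) =
   \sum_(i < (AV V).+1) \sum_(j < (BV V).+1) ('C(AV V, i) * 'C(BV V, j))%:Z * F i j)%R.
Proof.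
pose U1 := V :&: Lp. pose U2 := V :\: Lp.
pose D := [set XY : {set T} * {set T} | (XY.1 \subset U1) && (XY.2 \subset U2)].
pose h := fun XY : {set T} * {set T} => XY.1 :|: XY.2.
have hXY : forall X Y : {set T}, X \subset U1 -> Y \subset U2 ->
    ((X :|: Y) :&: Lp = X) /\ ((X :|: Y) :\: Lp = Y).
  move=> X Y XU YU; split; apply/setP => z; rewrite ?in_setI ?in_setD ?in_setU;
  case zX: (z \in X); case zY: (z \in Y); case zL: (z \in Lp) => //=;
  first [ by move/subsetP: XU => /(_ z zX); rewrite in_setI zL andbF
        | by move/subsetP: YU => /(_ z zY); rewrite in_setD zL ].
have himg : [set W : {set T} | W \subset V] = h @: D.
  apply/setP => W; rewrite inE; apply/idP/imsetP.
  - move=> WV; exists (W :&: Lp, W :\: Lp).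
      by rewrite inE /= /U1 /U2 setSI // setSD.
    by rewrite /h /= setID.
  - move=> [[X Y]]; rewrite inE /= => /andP[XU YU] ->; rewrite /h /= subUset.
    apply/andP; split; [apply: subset_trans XU (subsetIl _ _) | apply: subset_trans YU (subsetDl _ _)].
have hinj : {in D &, injective h}.
  move=> [X Y] [X' Y']; rewrite !inE /= /h /= => /andP[XU YU] /andP[XU' YU'] E.
  have [e1 e2] := hXY _ _ XU YU; have [e1' e2'] := hXY _ _ XU' YU'.
  rewrite E in e1 e2; congr (_, _); [by rewrite -e1 e1' | by rewrite -e2 e2'].
rewrite (eq_bigl (fun W => W \in h @: D)); last by move=> W; rewrite -himg inE.
rewrite big_imset //=.
rewrite (eq_bigr (fun XY : {set T} * {set T} => F #|XY.1| #|XY.2|)); last first.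
  move=> [X Y]; rewrite inE /= => /andP[XU YU]; have [e1 e2] := hXY _ _ XU YU.
  by rewrite /AV /BV /h /= e1 e2.
rewrite (eq_bigl (fun XY : {set T} * {set T} => (XY.1 \subset U1) && (XY.2 \subset U2))); last first.
  by move=> XY; rewrite inE.
rewrite -(pair_big_dep (fun X : {set T} => X \subset U1) (fun _ (Y : {set T}) => Y \subset U2) (fun X Y : {set T} => F #|X| #|Y|)) /=.
rewrite (eq_bigr (fun X : {set T} => \sum_(j < (BV V).+1) ('C(BV V, j))%:Z * F #|X| j)%R); last first.
  by move=> X _; rewrite sum_by_card.
rewrite (sum_by_card U1 (fun i => \sum_(j < (BV V).+1) ('C(BV V, j))%:Z * F i j)%R).
apply: eq_bigr => i _; rewrite mulr_sumr; apply: eq_bigr => j _.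
by rewrite mulrA PoszM.
Qed.

Lemma sa_fuelE n (V : {set T}) : (#|V| <= n)%N -> sa_fuel e n V = Sf n (AV V) (BV V).
Proof.
elim: n V => [|n IH] V hV.
  have V0e : V = set0 by apply/eqP; rewrite -cards_eq0 -leqn0.
  by rewrite V0e /= eqxx /AV /BV set0I set0D cards0.
rewrite /=.
case: (boolP (V == set0)) => [/eqP ->|Vn0].
  by rewrite /AV /BV set0I set0D cards0.
rewrite (odd_comp Vn0).
move: (Vn0); rewrite V0 => /negbTE ->.
case: (oddc _ _) => //.
congr (- _)%R.
rewrite (eq_bigr (fun W => Sf n (AV W) (BV W))); last first.
  move=> W WV; apply: IH; rewrite -ltnS; apply: leq_trans hV; exact: proper_card.
pose F' := fun i j => if (i == AV V) && (j == BV V) then 0%R else Sf n i j.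
transitivity (\sum_(W : {set T} | W \subset V) F' (AV W) (BV W))%R.
  rewrite [RHS]big_mkcond [LHS]big_mkcond; apply: eq_bigr => W _.
  rewrite properEneq /F'.
  case WV: (W \subset V); rewrite ?andbT ?andbF //=.
  have -> : (AV W == AV V) && (BV W == BV V) = (W == V).
    apply/andP/eqP => [[/eqP ha /eqP hb]|->]; last by [].
    by apply/eqP; rewrite eqEcard WV /= !cardAB ha hb.
  by case: (W == V).
rewrite sum_subsets; apply: eq_bigr => i _; apply: eq_bigr => j _.
by rewrite /F'; case: ifP => _; rewrite ?mulr0.
Qed.

Lemma card_Lp : #|Lp| = p.
Proof.
have -> : Lp = [set lshift q i | i : 'I_p].
  apply/setP => x; rewrite inE; apply/idP/imsetP => [xp|[i _ ->]]; last by rewrite /= ltn_ord.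
  by exists (Ordinal xp) => //; apply/val_inj.
by rewrite card_imset ?card_ord //; apply: lshift_inj.
Qed.

End Graph.

Lemma sa_K_Sf p q : sa_K p q = Sf (p + q) p q.
Proof.
rewrite /sa_K /sa_graph /sa sa_fuelE; last by [].
have hA : AV [set: 'I_(p + q)] = p by rewrite /AV setTI card_Lp.
have hB : BV [set: 'I_(p + q)] = q.
  by have := cardAB [set: 'I_(p + q)]; rewrite cardsT card_ord hA => /eqP; rewrite eqn_add2l => /eqP.
by rewrite hA hB cardsT card_ord.
Qed.

Definition S a b := Sf (a + b) a b.

Lemma Sf_fuel n m a b : (a + b <= n)%N -> (a + b <= m)%N -> Sf n a b = Sf m a b.
Proof.
elim: n m a b => [|n IH] m a b han ham.
  by move: han; rewrite leqn0 addn_eq0 => /andP[/eqP -> /eqP ->]; case: m ham.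
case: m ham => [|m] ham.
  by move: ham; rewrite leqn0 addn_eq0 => /andP[/eqP -> /eqP ->].
rewrite /=; case: ifP => // _; case: ifP => // _.
congr (- _)%R; apply: eq_bigr => i _; apply: eq_bigr => j _.
case: ifP => // hij; congr (_ * _)%R; apply: IH.
  by have := ltn_ord i; have := ltn_ord j; move: hij; move: (i : nat) (j : nat) => i' j'; lia.
by have := ltn_ord i; have := ltn_ord j; move: hij; move: (i : nat) (j : nat) => i' j'; lia.
Qed.

Lemma sa_K_S p q : sa_K p q = S p q.
Proof. exact: sa_K_Sf. Qed.

Lemma S00 : S 0 0 = 1%R.
Proof. by []. Qed.

Lemma Sf_odd n a b : odd (a + b) -> Sf n a b = 0%R.
Proof.
move=> h; case: n => [|n] /=; (case: ifP => [/andP[/eqP a0 /eqP b0]|_]; first by move: h; rewrite a0 b0);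
  by rewrite /oddc h !orbT.
Qed.

Lemma Sf_ax1 n a : (0 < a)%N -> Sf n a 0 = 0%R.
Proof.
move=> h; case: n => [|n] /=; rewrite (negbTE (lt0n_neq0 h)) /= /oddc eqxx orbT //.
Qed.

Lemma Sf_ax2 n b : (0 < b)%N -> Sf n 0 b = 0%R.
Proof.
by move=> h; case: n => [|n] /=; rewrite (negbTE (lt0n_neq0 h)) /= /oddc.
Qed.

Lemma key_max a b (k : 'I_a.+1 * 'I_b.+1) : k != (ord_max, ord_max) ->
   ((k.1 : nat) == a) && ((k.2 : nat) == b) = false.
Proof.
case: k => [i j] /=; apply: contraNF => /andP[/eqP hi /eqP hj].
by apply/eqP; congr (_, _); apply/val_inj.
Qed.

Lemma lt_max a b (k : 'I_a.+1 * 'I_b.+1) : k != (ord_max, ord_max) ->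
   (k.1 + k.2 < a + b)%N.
Proof.
move=> hk; have := key_max hk; case: k hk => [i j] _ /=.
by have := ltn_ord i; have := ltn_ord j; move: (i : nat) (j : nat) => i' j'; lia.
Qed.

Lemma SE a b : (0 < a)%N -> (0 < b)%N -> ~~ odd (a + b) ->
  S a b = (- \sum_(k : 'I_a.+1 * 'I_b.+1 | k != (ord_max, ord_max))
              ('C(a, k.1) * 'C(b, k.2))%:Z * S k.1 k.2)%R.
Proof.
move=> ha hb hab.
have [n hn] : exists n, a + b = n.+1 by exists (a+b).-1; rewrite prednK // addn_gt0 ha.
rewrite /S hn /= (negbTE (lt0n_neq0 ha)) /=.
have -> : oddc a b = false.
  by rewrite /oddc (negbTE (lt0n_neq0 ha)) (negbTE (lt0n_neq0 hb)) (negbTE hab).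
rewrite pair_bigA (bigD1 (ord_max, ord_max)) //= !eqxx /= add0r.
congr (- _)%R; apply: eq_bigr => k hk; rewrite key_max //.
congr (_ * _)%R; apply: Sf_fuel => //.
by rewrite -ltnS -hn lt_max.
Qed.

Lemma Srec a b : (0 < a)%N -> (0 < b)%N -> ~~ odd (a + b) ->
  (\sum_(i < a.+1) \sum_(j < b.+1) ('C(a, i) * 'C(b, j))%:Z * S i j = 0)%R.
Proof.
move=> ha hb hab.
rewrite pair_bigA (bigD1 (ord_max, ord_max)) //= !binn mul1n.
rewrite (mul1r (S a b)) (SE ha hb hab) addNr //.
Qed.

Lemma abs_sum_le (I : finType) (P : pred I) (F : I -> int) :
  (`|(\sum_(i | P i) F i)%R| <= \sum_(i | P i) `|F i|)%N.
Proof.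
elim/big_rec2: _ => // i y1 y2 _ H.
have hD : (`|(F i + y1)%R| <= `|F i| + `|y1|)%N by lia.
by apply: leq_trans hD _; rewrite leq_add2l.
Qed.

Lemma geo4 m : (3 * \sum_(i < m.+1) 4 ^ i).+1 = 4 ^ m.+1.
Proof.
elim: m => [|m IH]; first by rewrite big_ord_recr big_ord0.
rewrite big_ord_recr /= (expnS 4 m.+1); move: IH.
set s := \sum_(i < m.+1) 4 ^ i; set X := 4 ^ m.+1; lia.
Qed.

Lemma binfact_le a i : (i <= a)%N -> ('C(a, i) * i`! <= a`!)%N.
Proof.
by move=> hi; rewrite -(bin_fact hi) mulnA leq_pmulr // fact_gt0.
Qed.

Lemma Sbound a b : (`|S a b| <= a`! * b`! * 4 ^ (a + b))%N.
Proof.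
have [n hn] := ubnP (a + b); elim: n a b hn => // n IH a b hab.
case: (posnP a) => [->|ha].
  case: (posnP b) => [->|hb]; first by [].
  by rewrite /S Sf_ax2.
case: (posnP b) => [->|hb]; first by rewrite /S Sf_ax1.
case: (boolP (odd (a + b))) => hodd; first by rewrite /S Sf_odd.
rewrite (SE ha hb hodd) abszN.
apply: leq_trans (abs_sum_le _ _) _.
pose g := fun k : 'I_a.+1 * 'I_b.+1 => (a`! * b`! * 4 ^ (k.1 + k.2))%N.
apply: (@leq_trans (\sum_(k | k != (ord_max, ord_max)) g k)).
  apply: leq_sum => k hk.
  rewrite abszM absz_nat.
  have h3 := IH k.1 k.2 (leq_trans (lt_max hk) (_ : (a + b <= n)%N)).
  have h1 := binfact_le (leq_ord k.1).
  have h2 := binfact_le (leq_ord k.2).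
  apply: (leq_trans (leq_mul (leqnn _) (h3 _))); first by rewrite -ltnS.
  rewrite /g.
  rewrite (_ : ('C(a, k.1) * 'C(b, k.2) * (k.1`! * k.2`! * 4 ^ (k.1 + k.2)) =
     ('C(a, k.1) * k.1`!) * ('C(b, k.2) * k.2`!) * 4 ^ (k.1 + k.2))%N); last by lia.
  by rewrite leq_mul // leq_mul.
have hsplit : (\sum_k g k = g (ord_max, ord_max) + \sum_(k | k != (ord_max, ord_max)) g k)%N.
  by rewrite (bigD1 (ord_max, ord_max)).
have hall : (\sum_(k | k != (ord_max, ord_max)) g k + g (ord_max, ord_max) =
   a`! * b`! * ((\sum_(i < a.+1) 4 ^ i) * (\sum_(j < b.+1) 4 ^ j)))%N.
  rewrite addnC -hsplit -(pair_bigA _ (fun i j => g (i, j))) /=.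
  rewrite big_distrl /= big_distrr /=; apply: eq_bigr => i _.
  rewrite big_distrr /= big_distrr /=; apply: eq_bigr => j _.
  by rewrite /g /= expnD; lia.
have gmax : g (ord_max, ord_max) = (a`! * b`! * 4 ^ (a + b))%N by [].
have gA := geo4 a. have gB := geo4 b.
move: hall; rewrite gmax expnD (expnS 4 a) (expnS 4 b) in gA gB *.
set SA := \sum_(i < a.+1) 4 ^ i; set SB := \sum_(j < b.+1) 4 ^ j.
set R := \sum_(k | k != (ord_max, ord_max)) g k.
set F := (a`! * b`!)%N; set A := 4 ^ a; set B := 4 ^ b.
move=> hall.
have h3A : (3 * SA <= 4 * A)%N by lia.
have h3B : (3 * SB <= 4 * B)%N by lia.
have hm := leq_mul h3A h3B.
have hSS : (SA * SB <= 2 * (A * B))%N.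
  move: hm; rewrite (_ : (3 * SA * (3 * SB) = 9 * (SA * SB))%N); last by lia.
  rewrite (_ : (4 * A * (4 * B) = 16 * (A * B))%N); last by lia.
  move: (SA * SB)%N (A * B)%N => x y; lia.
have : (F * (SA * SB) <= F * (2 * (A * B)))%N by rewrite leq_mul.
rewrite -hall; lia.
Qed.

From mathcomp Require Import ssrZ.
Local Open Scope R_scope.

Lemma int_to_RE z : int_to_R z = IZR (Z_of_int z).
Proof.
case: z => n; rewrite /int_to_R.
  by rewrite INR_IZR_INZ; f_equal; lia.
rewrite INR_IZR_INZ -opp_IZR; f_equal; lia.
Qed.

Lemma int_to_R_add x y : int_to_R (x + y)%R = int_to_R x + int_to_R y.
Proof. rewrite !int_to_RE -plus_IZR; f_equal; lia. Qed.

Lemma int_to_R_mul x y : int_to_R (x * y)%R = int_to_R x * int_to_R y.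
Proof. rewrite !int_to_RE -mult_IZR; f_equal; nia. Qed.

Lemma int_to_R_opp x : int_to_R (- x)%R = - int_to_R x.
Proof. rewrite !int_to_RE -opp_IZR; f_equal; lia. Qed.

Lemma int_to_R_nat (n : nat) : int_to_R (Posz n) = INR n.
Proof. by []. Qed.

Lemma int_to_R_sum n (F : nat -> int) :
  int_to_R (\sum_(i < n.+1) F i)%R = sum_f_R0 (fun i => int_to_R (F i)) n.
Proof.
elim: n => [|n IH]; first by rewrite big_ord_recr big_ord0 /= add0r.
by rewrite big_ord_recr /= int_to_R_add IH.
Qed.

Lemma Rabs_int_to_R z : Rabs (int_to_R z) = INR `|z|%N.
Proof.
case: z => n; rewrite /int_to_R; first by rewrite Rabs_pos_eq //; apply: pos_INR.
by rewrite Rabs_Ropp Rabs_pos_eq //; apply: pos_INR.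
Qed.

Lemma fact_factorial n : factorial n = Factorial.fact n.
Proof. by elim: n => // n IH; rewrite factS IH /= multE. Qed.

Lemma INR_expn (m n : nat) : INR (m ^ n)%N = INR m ^ n.
Proof. by elim: n => [|n IH] //; rewrite expnS mult_INR IH. Qed.

Definition sR a b := int_to_R (S a b).

Lemma sR00 : sR 0 0 = 1.
Proof. by rewrite /sR S00. Qed.

Lemma sR_odd a b : odd (a + b) -> sR a b = 0.
Proof. by move=> h; rewrite /sR /S Sf_odd. Qed.

Lemma sR_ax1 a : (0 < a)%N -> sR a 0 = 0.
Proof. by move=> h; rewrite /sR /S Sf_ax1. Qed.

Lemma sR_ax2 b : (0 < b)%N -> sR 0 b = 0.
Proof. by move=> h; rewrite /sR /S Sf_ax2. Qed.

Lemma sR_bound a b :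
  Rabs (sR a b) <= INR (Factorial.fact a) * INR (Factorial.fact b) * 4 ^ a * 4 ^ b.
Proof.
rewrite /sR Rabs_int_to_R -!fact_factorial.
have h := Sbound a b; move/leP: h => /le_INR.
have h4 : INR 4 = 4 by rewrite INR_IZR_INZ.
by rewrite expnD !mult_INR !INR_expn h4 -!Rmult_assoc.
Qed.

Lemma Srev p q : (0 < p)%N -> (0 < q)%N -> ~~ odd (p + q) ->
  (\sum_(k < p.+1) \sum_(l < q.+1) ('C(p, k) * 'C(q, l))%:Z * S (p - k) (q - l) = 0)%R.
Proof.
move=> hp hq h; rewrite -[RHS](Srec hp hq h).
rewrite [RHS](reindex_inj rev_ord_inj) /=; apply: eq_bigr => k _.
rewrite [RHS](reindex_inj rev_ord_inj) /=; apply: eq_bigr => l _.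
by rewrite !subSS !bin_sub // -ltnS.
Qed.

Lemma sR_rec p q : (0 < p)%N -> (0 < q)%N -> ~~ odd (p + q) ->
  sum_f_R0 (fun k => sum_f_R0 (fun l =>
     INR 'C(p, k) * INR 'C(q, l) * sR (p - k) (q - l)) q) p = 0.
Proof.
move=> hp hq h.
have H := congr1 int_to_R (Srev hp hq h).
rewrite (int_to_R_sum p (fun k => \sum_(l < q.+1) (('C(p, k) * 'C(q, l))%:Z * S (p - k) (q - l)))%R) in H.
rewrite -[RHS]H /=.
apply PartSum.sum_eq => k _.
rewrite (int_to_R_sum q (fun l => (('C(p, k) * 'C(q, l))%:Z * S (p - k) (q - l)))%R).
apply PartSum.sum_eq => l _.
by rewrite int_to_R_mul PoszM int_to_R_mul.
Qed.

Unset Implicit Arguments.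
Definition fr n := INR (Factorial.fact n).

Lemma fr_pos n : 0 < fr n.
Proof. exact: INR_fact_lt_0. Qed.

Lemma fr_neq0 n : fr n <> 0.
Proof. exact: INR_fact_neq_0. Qed.

Lemma isR_plus a b la lb : is_series a la -> is_series b lb ->
  is_series (fun n => a n + b n) (la + lb).
Proof. move=> Ha Hb; exact: (is_series_plus _ _ _ _ Ha Hb). Qed.

Lemma isR_scal c a l : is_series a l -> is_series (fun n => c * a n) (c * l).
Proof. move=> H; exact: (is_series_scal_l c _ _ H). Qed.

Lemma myexp_series z : is_series (fun n => z ^ n / fr n) (exp z).
Proof.
have H := is_exp_Reals z; rewrite /is_pseries in H.
eapply is_series_ext; last exact H.
move=> n /=; rewrite pow_n_pow; reflexivity.
Qed.

Lemma ex_exp_abs z : ex_series (fun n => Rabs (z ^ n / fr n)).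
Proof.
eexists; eapply is_series_ext; last exact (myexp_series (Rabs z)); move=> n /=.
rewrite Rabs_mult Rabs_inv RPow_abs (Rabs_pos_eq (fr n)) //.
exact: Rlt_le (fr_pos n).
Qed.

Lemma binR n k : (k <= n)%N -> INR 'C(n, k) = fr n / (fr k * fr (n - k)).
Proof.
move=> hk; have := bin_fact hk; move/(congr1 INR); rewrite !mult_INR !fact_factorial => H.
rewrite /fr -H; field; split; apply: fr_neq0.
Qed.

Definition Tc (c : R) (u : nat -> R) (n : nat) :=
  sum_f_R0 (fun k => INR 'C(n, k) * c ^ k * u (n - k)%N) n.

Lemma TL c z u U : ex_series (fun n => Rabs (u n * (z ^ n / fr n))) ->
  is_series (fun n => u n * (z ^ n / fr n)) U ->
  is_series (fun n => Tc c u n * (z ^ n / fr n)) (exp (c * z) * U).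
Proof.
move=> Habs HU.
have H := is_series_mult _ _ _ _ (myexp_series (c * z)) HU (ex_exp_abs (c * z)) Habs.
eapply is_series_ext; last exact H; move=> n /=.
rewrite /Tc [RHS]Rmult_comm scal_sum; apply PartSum.sum_eq => k hk.
move/leP: hk => hk; rewrite minusE (binR _ _ hk).
have -> : z ^ n = z ^ k * z ^ (n - k)%N.
  rewrite -pow_add; f_equal; lia.
rewrite Rpow_mult_distr; field; repeat split; apply: fr_neq0.
Qed.

Lemma is_series_sumf N (A : nat -> nat -> R) (L : nat -> R) :
  (forall k, (k <= N)%N -> is_series (A k) (L k)) ->
  is_series (fun q => sum_f_R0 (fun k => A k q) N) (sum_f_R0 L N).
Proof.
elim: N => [|N IH] H /=; first by apply: H.
apply: isR_plus; last exact: H.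
by apply: IH => k hk; apply: H; apply: leqW.
Qed.

Lemma is_series_delta v : is_series (fun n => if n == 0%N then v else 0) v.
Proof.
have H := isR_scal v _ _ (myexp_series 0); rewrite exp_0 Rmult_1_r in H.
eapply is_series_ext; last exact H.
case=> [|n].
  rewrite /fr /=; field.
rewrite /= Rmult_0_l /Rdiv Rmult_0_l Rmult_0_r; reflexivity.
Qed.

Lemma sum_zero f n : (forall k, (k <= n)%N -> f k = 0) -> sum_f_R0 f n = 0.
Proof.
elim: n => [|n IH] H /=; first exact: H.
rewrite IH ?H ?Rplus_0_l //.
by move=> k hk; apply: H; apply: leqW.
Qed.

Lemma sum_last f n : (forall k, (k < n)%N -> f k = 0) -> sum_f_R0 f n = f n.
Proof.
case: n => [|n] H //=.
rewrite sum_zero ?Rplus_0_l // => k hk; apply: H; by rewrite ltnS.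
Qed.

Lemma neg1_pow_double k : (-1) ^ (k.*2) = 1.
Proof. elim: k => [|k IH] //; rewrite doubleS /= IH; ring. Qed.

Lemma neg1_pow_even m : ~~ odd m -> (-1) ^ m = 1.
Proof.
move=> h; rewrite -(odd_double_half m) (negbTE h) add0n; exact: neg1_pow_double.
Qed.

Lemma neg1_pow_odd m : odd m -> (-1) ^ m = -1.
Proof.
move=> h; rewrite -(odd_double_half m) h add1n /= neg1_pow_double; ring.
Qed.

Definition Hc (c : R) (p q : nat) :=
  sum_f_R0 (fun k => INR 'C(p, k) * c ^ k * Tc c (sR (p - k)%N) q) p.

Lemma HcE c p q : Hc c p q = sum_f_R0 (fun k => sum_f_R0 (fun l =>
   INR 'C(p, k) * INR 'C(q, l) * (c ^ k * c ^ l) * sR (p - k)%N (q - l)%N) q) p.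
Proof.
apply PartSum.sum_eq => k hk; rewrite /Tc scal_sum.
apply PartSum.sum_eq => l hl; ring.
Qed.

Lemma Hc_neg p q : Hc (-1) p q = (-1) ^ (p + q) * Hc 1 p q.
Proof.
rewrite !HcE scal_sum; apply PartSum.sum_eq => k /leP hk.
rewrite Rmult_comm scal_sum; apply PartSum.sum_eq => l /leP hl.
case: (boolP (odd ((p - k) + (q - l)))) => hodd.
  by rewrite sR_odd //; ring.
have -> : (-1) ^ k * (-1) ^ l = (-1) ^ (p + q).
  have -> : (p + q)%N = ((k + l)%N + (p - k + (q - l))%N)%coq_nat by lia.
  by rewrite pow_add (neg1_pow_even _ hodd) Rmult_1_r -plusE pow_add.
rewrite !pow1; ring.
Qed.

Definition Dv (p q : nat) : R := if p == 0%N then 1 else if q == 0%N then 1 else 0.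

Lemma Hc1 p q : ~~ odd (p + q) -> Hc 1 p q = Dv p q.
Proof.
move=> hpq; rewrite HcE /Dv.
case: (posnP p) => [->|hp].
  rewrite /=; case: (posnP q) => [->|hq].
    by rewrite /= sR00; simpl INR; ring.
  rewrite sum_last.
    by rewrite !subnn sR00 !binn !pow1; simpl INR; ring.
  move=> l hl; rewrite subnn sR_ax2; first ring.
  by rewrite subn_gt0.
rewrite ?(negbTE (lt0n_neq0 hp)).
case: (posnP q) => [->|hq].
  rewrite ?eqxx sum_last.
    by rewrite /= subnn sR00 binn !pow1; simpl INR; ring.
  move=> k hk /=; rewrite sR_ax1; first ring.
  by rewrite subn_gt0.
rewrite ?(negbTE (lt0n_neq0 hq)).
rewrite -(sR_rec hp hq hpq).
apply PartSum.sum_eq => k _; apply PartSum.sum_eq => l _; rewrite !pow1; ring.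
Qed.

Definition Kf (p q : nat) := (1 + (-1) ^ (p + q)) * Dv p q.

Lemma Hc_sum p q : Hc 1 p q + Hc (-1) p q = Kf p q.
Proof.
rewrite Hc_neg /Kf.
case: (boolP (odd (p + q))) => h.
  by rewrite neg1_pow_odd //; ring.
by rewrite Hc1 //; ring.
Qed.

Lemma term_bound y p q :
  Rabs (sR p q * (y ^ q / fr q)) <= fr p * 4 ^ p * (4 * Rabs y) ^ q.
Proof.
have h1 := @sR_bound p q.
rewrite Rabs_mult /Rdiv Rabs_mult Rabs_inv -RPow_abs (Rabs_pos_eq (fr q)); last exact: Rlt_le (fr_pos q).
apply: Rle_trans.
  apply: Rmult_le_compat_r; last exact: h1.
  apply: Rmult_le_pos; first exact: pow_le (Rabs_pos y).
  exact: Rlt_le (Rinv_0_lt_compat _ (fr_pos q)).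
right; rewrite Rpow_mult_distr /fr; field; apply: fr_neq0.
Qed.

Lemma inner_abs y p : Rabs y < 1/8 -> ex_series (fun q => Rabs (sR p q * (y ^ q / fr q))).
Proof.
move=> hy.
apply: (ex_series_le _ (fun q => fr p * 4 ^ p * (4 * Rabs y) ^ q)).
  move=> q; rewrite /norm /= /abs /= Rabs_Rabsolu; exact: term_bound.
apply: (ex_series_ext (fun q => scal (fr p * 4 ^ p) ((4 * Rabs y) ^ q))) => //.
apply: ex_series_scal; apply: ex_series_geom.
rewrite Rabs_pos_eq; have := Rabs_pos y; lra.
Qed.

Definition w y p := Series (fun q => sR p q * (y ^ q / fr q)).

Lemma w_bound y p : Rabs y < 1/8 -> Rabs (w y p) <= 2 * (fr p * 4 ^ p).
Proof.
move=> hy; set C := fr p * 4 ^ p; set r := 4 * Rabs y.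
have hr : 0 <= r <= 1/2 by have := Rabs_pos y; rewrite /r; lra.
have hr1 : Rabs r < 1 by rewrite Rabs_pos_eq; lra.
apply: Rle_trans (Series_Rabs _ (inner_abs y p hy)) _.
have hb := isR_scal C (fun q => r ^ q) _ (is_series_geom r hr1).
apply: Rle_trans (Series_le _ _ _ (ex_intro _ _ hb)) _.
  move=> q; split; [exact: Rabs_pos | exact: term_bound].
rewrite (is_series_unique _ _ hb).
have hC : 0 <= C by apply: Rmult_le_pos; [exact: Rlt_le (fr_pos p) | apply: pow_le; lra].
have hi : / (1 - r) <= 2.
  rewrite (_ : 2 = / (1/2)); last by field.
  apply: Rinv_le_contravar; lra.
rewrite (Rmult_comm 2); apply: Rmult_le_compat_l => //.
Qed.

Lemma outer_abs x y : Rabs x < 1/8 -> Rabs y < 1/8 ->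
  ex_series (fun p => Rabs (w y p * (x ^ p / fr p))).
Proof.
move=> hx hy.
apply: (ex_series_le _ (fun p => 2 * (4 * Rabs x) ^ p)).
  move=> p; rewrite /norm /= /abs /= Rabs_Rabsolu.
  rewrite Rabs_mult /Rdiv Rabs_mult Rabs_inv -RPow_abs (Rabs_pos_eq (fr p)); last exact: Rlt_le (fr_pos p).
  apply: Rle_trans.
    apply: Rmult_le_compat_r; last exact: w_bound.
    apply: Rmult_le_pos; first exact: pow_le (Rabs_pos x).
    exact: Rlt_le (Rinv_0_lt_compat _ (fr_pos p)).
  right; rewrite Rpow_mult_distr /fr; field; apply: fr_neq0.
apply: (ex_series_ext (fun p => scal 2 ((4 * Rabs x) ^ p))) => //.
apply: ex_series_scal; apply: ex_series_geom.
rewrite Rabs_pos_eq; have := Rabs_pos x; lra.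
Qed.

Definition Vp y p := if p == 0%N then exp y + exp (- y) else 1 + (-1) ^ p.

Lemma key x y : Rabs x < 1/8 -> Rabs y < 1/8 ->
  is_series (fun p => w y p * (x ^ p / fr p)) ((cosh x + cosh y - 1) / cosh (x + y)).
Proof.
move=> hx hy.
set G := Series (fun p => w y p * (x ^ p / fr p)).
have hG : is_series (fun p => w y p * (x ^ p / fr p)) G.
  by apply: Series_correct; apply: ex_series_Rabs; apply: outer_abs.
have hI : forall c p, is_series (fun q => Tc c (sR p) q * (y ^ q / fr q)) (exp (c * y) * w y p).
  move=> c p; apply: TL; first exact: inner_abs.
  by apply: Series_correct; apply: ex_series_Rabs; apply: inner_abs.
have hO : forall c, is_series (fun p => Tc c (w y) p * (x ^ p / fr p)) (exp (c * x) * G).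
  by move=> c; apply: TL; [exact: outer_abs | exact: hG].
have hM : forall c p, is_series (fun q => Hc c p q * (y ^ q / fr q)) (exp (c * y) * Tc c (w y) p).
  move=> c p.
  have H := is_series_sumf p
    (fun k q => INR 'C(p, k) * c ^ k * (Tc c (sR (p - k)%N) q * (y ^ q / fr q)))
    (fun k => INR 'C(p, k) * c ^ k * (exp (c * y) * w y (p - k)%N))
    (fun k _ => isR_scal _ _ _ (hI c (p - k)%N)).
  have E1 : sum_f_R0 (fun k => INR 'C(p, k) * c ^ k * (exp (c * y) * w y (p - k)%N)) p
      = exp (c * y) * Tc c (w y) p.
    rewrite /Tc scal_sum; apply PartSum.sum_eq => k _; ring.
  rewrite E1 in H; eapply is_series_ext; last exact H.
  move=> q /=; rewrite /Hc [RHS]Rmult_comm scal_sum; apply PartSum.sum_eq => k _; ring.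
have hP : forall c, is_series (fun p => (exp (c * y) * Tc c (w y) p) * (x ^ p / fr p))
                               (exp (c * y) * (exp (c * x) * G)).
  move=> c; have H := isR_scal (exp (c * y)) _ _ (hO c).
  eapply is_series_ext; last exact H; move=> p /=; ring.
have hS : forall p, Series (fun q => Kf p q * (y ^ q / fr q)) =
    exp (1 * y) * Tc 1 (w y) p + exp (-1 * y) * Tc (-1) (w y) p.
  move=> p; apply: is_series_unique.
  have H := isR_plus _ _ _ _ (hM 1 p) (hM (-1) p).
  eapply is_series_ext; last exact H; move=> q /=; rewrite -Hc_sum; ring.
have hV : forall p, is_series (fun q => Kf p q * (y ^ q / fr q)) (Vp y p).
  case=> [|p].
    have H := isR_plus _ _ _ _ (myexp_series y) (myexp_series (- y)).
    eapply is_series_ext; last exact H; move=> q /=.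
    rewrite /Kf /Dv /= add0n.
    replace (- y) with (-1 * y) by ring; rewrite Rpow_mult_distr; field; apply: fr_neq0.
  have H := is_series_delta (1 + (-1) ^ p.+1).
  eapply is_series_ext; last exact H; case=> [|q] /=.
    by rewrite /Kf /Dv /= addn0 /fr /=; field.
  by rewrite /Kf /Dv /=; ring.
have hOut : is_series (fun p => Vp y p * (x ^ p / fr p))
   (exp (1 * y) * (exp (1 * x) * G) + exp (-1 * y) * (exp (-1 * x) * G)).
  have H := isR_plus _ _ _ _ (hP 1) (hP (-1)).
  eapply is_series_ext; last exact H; move=> p /=.
  rewrite -(is_series_unique _ _ (hV p)) hS; ring.
have hOut2 : is_series (fun p => Vp y p * (x ^ p / fr p))
   (exp x + exp (- x) + (exp y + exp (- y) - 2)).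
  have H := isR_plus _ _ _ _ (isR_plus _ _ _ _ (myexp_series x) (myexp_series (- x)))
                             (is_series_delta (exp y + exp (- y) - 2)).
  eapply is_series_ext; last exact H; case=> [|p] /=.
    by rewrite /Vp /fr /=; field.
  rewrite /Vp /=; replace (- x) with (-1 * x) by ring; rewrite Rpow_mult_distr; field; apply: fr_neq0.
have E := is_series_unique _ _ hOut.
rewrite (is_series_unique _ _ hOut2) in E.
replace (-1 * y) with (- y) in E by ring.
replace (-1 * x) with (- x) in E by ring.
rewrite !Rmult_1_l in E.
have hT : (cosh x + cosh y - 1) / cosh (x + y) = G.
  rewrite /cosh exp_plus Ropp_plus_distr exp_plus.
  set D := exp x * exp y + exp (- x) * exp (- y).
  have hD : 0 < D.
    rewrite /D; have := exp_pos x; have := exp_pos y; have := exp_pos (- x); have := exp_pos (- y); nra.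
  have E' : D * G = exp x + exp (- x) + (exp y + exp (- y) - 2) by rewrite E /D; ring.
  have -> : G = (exp x + exp (- x) + (exp y + exp (- y) - 2)) / D.
    by rewrite -E'; field; apply: Rgt_not_eq.
  rewrite /D; field; rewrite -/D; exact: Rgt_not_eq.
by rewrite hT.
Qed.

Open Scope R_scope.

Theorem mainTheorem6 :
  exists r : R, 0 < r /\
    forall x y : R, Rabs x < r -> Rabs y < r ->
      (forall p : nat,
          ex_series (fun q : nat =>
            int_to_R (sa_K p q) * (x ^ p / INR (factorial p)) * (y ^ q / INR (factorial q)))) /\
      is_series
        (fun p : nat => Series (fun q : nat =>
            int_to_R (sa_K p q) * (x ^ p / INR (factorial p)) * (y ^ q / INR (factorial q))))
        ((cosh x + cosh y - 1) / cosh (x + y)).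
Proof.
exists (1/8); split; first lra.
move=> x y hx hy; split.
  move=> p.
  have H := ex_series_scal (x ^ p / fr p) _ (ex_series_Rabs _ (inner_abs y p hy)).
  apply: (ex_series_ext _ _ _ H) => q.
  rewrite /scal /= /mult /= sa_K_S !fact_factorial /sR /fr; ring.
have H := key x y hx hy.
eapply is_series_ext; last exact H.
move=> p /=; rewrite /w -Series_scal_r; apply: Series_ext => q.
rewrite sa_K_S !fact_factorial /sR /fr; ring.
Qed.
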